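(* Consider a batch contextual bandit with finite context (state) space $\mathcal{S}$, finite action space $\mathcal{A}$, context distribution $d_0\in\Delta(\mathcal{S})$ and reward distributions $R(s,a)\in\Delta([0,R_{\max}])$. Let $\pi_b$ be a behavior policy, $\mu:=d_0\times\pi_b$, and let $\mathcal{F}$ be a finite class of functions $\mathcal{S}\times\mathcal{A}\to[0,R_{\max}]$. Let $\hat f\in\mathcal{F}$ satisfy $\mathcal{L}_\mu(\hat f)-\min_{f\in\mathcal{F}}\mathcal{L}_\mu(f)\le\epsilon$. Assume (i) there is a constant $C<+\infty$ with $\pi_b(a\mid s)\ge 1/C$ for all $s\in\mathcal{S},a\in\mathcal{A}$, and (ii) $Q^\star\in\mathcal{F}$, where $Q^\star(s,a)=\mathbb{E}_{r\sim R(s,a)}[r]$. Then $$v^{\pi_{\hat f}}\ \ge\ v^\star-2\sqrt{C\epsilon}.$$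
   Context: The behavior policy $\pi_b:\mathcal{S}\to\Delta(\mathcal{A})$ generates data $s\sim d_0$, $a\sim\pi_b(\cdot\mid s)$, $r\sim R(s,a)$; $\mu$ is the resulting joint distribution of $(s,a)$. The population squared loss is $\mathcal{L}_\mu(f):=\mathbb{E}_{(s,a)\sim\mu,\,r\sim R(s,a)}[(f(s,a)-r)^2]$. For a function $f$, $\pi_f$ is its greedy policy $s\mapsto\arg\max_{a\in\mathcal{A}}f(s,a)$ (ties broken by a fixed rule). For a deterministic policy $\pi$, $v^\pi:=\mathbb{E}_{s\sim d_0,\,r\sim R(s,\pi(s))}[r]$, and $v^\star:=\mathbb{E}_{s\sim d_0}[\max_{a}Q^\star(s,a)]$ is the optimal value. *)

(* Defs.v *)
From HB Require Import structures.
From mathcomp Require Import all_boot all_order all_algebra.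
From mathcomp Require Import all_classical all_reals all_analysis.
Set Implicit Arguments. Unset Strict Implicit. Unset Printing Implicit Defensive.
Import Order.TTheory GRing.Theory Num.Theory.
Local Open Scope ring_scope.
Local Open Scope classical_set_scope.

Section Bandit.
Variables (R : realType) (S A : finType).

Definition is_dist (T : finType) (p : T -> R) : Prop :=
  (forall x, 0 <= p x) /\ \sum_(x : T) p x = 1.

Definition Qstar (Rd : S -> A -> probability R R) (s : S) (a : A) : R :=
  Rintegral (Rd s a) setT (fun r => r).

Definition sq_loss (d0 : S -> R) (pib : S -> A -> R)
    (Rd : S -> A -> probability R R) (f : S -> A -> R) : R :=
  \sum_(s : S) \sum_(a : A)
     d0 s * pib s a * Rintegral (Rd s a) setT (fun r => (f s a - r) ^+ 2).

Definition value (d0 : S -> R) (Rd : S -> A -> probability R R)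
    (pi : S -> A) : R :=
  \sum_(s : S) d0 s * Rintegral (Rd s (pi s)) setT (fun r => r).

(* optimal value v* = E_{s~d0}[max_a Q*(s,a)]; a0 only seeds the (nonempty) max *)
Definition vstar (d0 : S -> R) (Rd : S -> A -> probability R R) (a0 : A) : R :=
  \sum_(s : S) d0 s * \big[Num.max/Qstar Rd s a0]_(a : A) Qstar Rd s a.

Definition greedy (f : S -> A -> R) (pi : S -> A) : Prop :=
  forall s a, f s a <= f s (pi s).

End Bandit.

(* Main.v *)
Require Import Defs.
From HB Require Import structures.
From mathcomp Require Import all_boot all_order all_algebra.
From mathcomp Require Import all_classical all_reals all_analysis.
From mathcomp Require Import measurable_realfun.
From mathcomp Require Import ring lra.
Import Order.TTheory GRing.Theory Num.Theory.
Local Open Scope ring_scope.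
Local Open Scope classical_set_scope.

Lemma int_bdd (R : realType) (P : probability R R) (Rmax : R)
  (hP : P `[0, Rmax] = 1%E) (g : R -> R) (mg : measurable_fun setT g)
  (B : R) (hB : forall x, 0 <= x <= Rmax -> `|g x| <= B) :
  P.-integrable setT (EFin \o g).
Proof.
have mI : measurable (`[0, Rmax] : set R) by [].
have hN : P (~` `[0, Rmax]) = 0%E.
  by rewrite probability_setC // hP subee.
have := @negligible_integrable _ _ _ P setT (~` `[0, Rmax]) (EFin \o g)
  (measurableC mI) measurableT.
move=> /(_ _ hN) ->; last by apply/measurable_EFinP.
rewrite setTD setCK.
apply: measurable_bounded_integrable => //.
- by apply: (le_lt_trans (probability_le1 P mI)); rewrite ltry.
- exact: measurable_funS mg.
- rewrite /bounded_near; near=> M => x /= Hx.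
  apply: (le_trans (hB x _)).
    by move: Hx; rewrite in_itv /=.
  near: M; apply: nbhs_pinfty_ge; exact: num_real.
Unshelve. all: by end_near. Qed.
Arguments int_bdd {R P Rmax} hP {g} mg B hB.

Lemma sq_int (R : realType) (P : probability R R) (Rmax : R)
  (hP : P `[0, Rmax] = 1%E) (c : R) :
  Rintegral P setT (fun r => (c - r) ^+ 2) =
  c ^+ 2 - 2 * c * Rintegral P setT (fun r => r)
  + Rintegral P setT (fun r => r ^+ 2).
Proof.
have i1 : P.-integrable setT (EFin \o (fun r : R => r)).
  apply: (int_bdd hP _ (Rmax)); first exact: measurable_id.
  by move=> x /andP[x0 xR]; rewrite ger0_norm.
have i2 : P.-integrable setT (EFin \o (fun r : R => r ^+ 2)).
  apply: (int_bdd hP _ (Rmax ^+ 2)).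
    by apply: measurable_funX; exact: measurable_id.
  move=> x /andP[x0 xR]; rewrite ger0_norm ?exprn_ge0 //.
  by rewrite lerXn2r // ?nnegrE // (le_trans x0 xR).
have i0 : P.-integrable setT (EFin \o (fun r : R => c ^+ 2)).
  apply: (int_bdd hP _ (`|c ^+ 2|)) => //; exact: measurable_cst.
have i3 : P.-integrable setT (EFin \o (fun r : R => 2 * c * r)).
  apply: (int_bdd hP _ (`|2 * c| * Rmax)).
    by apply: measurable_funM; [exact: measurable_cst | exact: measurable_id].
  move=> x /andP[x0 xR]; rewrite normrM (ger0_norm x0).
  by apply: ler_wpM2l.
have i4 : P.-integrable setT (EFin \o (fun r : R => c ^+ 2 - 2 * c * r)).
  apply: (int_bdd hP _ (`|c ^+ 2| + `|2 * c| * Rmax)).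
    apply: measurable_funB; first exact: measurable_cst.
    by apply: measurable_funM; [exact: measurable_cst | exact: measurable_id].
  move=> x /andP[x0 xR]; apply: (le_trans (ler_normB _ _)).
  rewrite lerD2l normrM (ger0_norm x0).
  by apply: ler_wpM2l.
have -> : (fun r => (c - r) ^+ 2) = (fun r => (c ^+ 2 - 2 * c * r) + r ^+ 2).
  by apply/funext => r; ring.
rewrite RintegralD // RintegralB // Rintegral_cst //.
have PT : fine (P [set: R]) = 1 by rewrite probability_setT.
by rewrite PT RintegralZl // mulr1.
Qed.
Arguments sq_int {R P Rmax} hP c.

Lemma jensen_sq (R : realType) (I : finType) (w y : I -> R) :
  (forall i, 0 <= w i) -> \sum_i w i = 1 ->
  (\sum_i w i * y i) ^+ 2 <= \sum_i w i * y i ^+ 2.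
Proof.
move=> w0 w1; set D := \sum_i w i * y i.
have H : 0 <= \sum_i w i * (y i - D) ^+ 2.
  by apply: sumr_ge0 => i _; rewrite mulr_ge0 // sqr_ge0.
rewrite (eq_bigr (fun i => w i * y i ^+ 2 - 2 * D * (w i * y i) + D ^+ 2 * w i))
  in H; last by move=> i _; ring.
rewrite big_split sumrB /= -!mulr_sumr w1 -/D in H.
nra.
Qed.
Arguments jensen_sq {R I w} y.

Theorem theorem1 (R : realType) (S A : finType) (a0 : A)
  (d0 : S -> R) (pib : S -> A -> R) (Rd : S -> A -> probability R R)
  (Rmax : R) (F : set (S -> A -> R)) (fhat : S -> A -> R) (eps C : R)
  (pi_fhat : S -> A) :
  is_dist d0 ->
  (forall s, is_dist (pib s)) ->
  (forall s a, Rd s a `[0, Rmax] = 1%E) ->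
  finite_set F ->
  (forall f, F f -> forall s a, 0 <= f s a <= Rmax) ->
  F fhat ->
  (forall f, F f -> sq_loss d0 pib Rd fhat - sq_loss d0 pib Rd f <= eps) ->
  0 < C ->
  (forall s a, C^-1 <= pib s a) ->
  F (Qstar Rd) ->
  greedy fhat pi_fhat ->
  value d0 Rd pi_fhat >= vstar d0 Rd a0 - 2 * Num.sqrt (C * eps).
Proof.
move=> [d00 d01] hpib hR _ _ _ hloss C0 hC hQ hgr.
set q := Qstar Rd.
pose T s := \sum_a (fhat s a - q s a) ^+ 2.
have loss_diff : forall s a,
    Rintegral (Rd s a) setT (fun r => (fhat s a - r) ^+ 2)
  - Rintegral (Rd s a) setT (fun r => (q s a - r) ^+ 2)
  = (fhat s a - q s a) ^+ 2.
  by move=> s a; rewrite !(sq_int (hR s a)) /q /Qstar; ring.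
have key1 : \sum_s d0 s * T s <= C * eps.
  have h := hloss _ hQ.
  have E : sq_loss d0 pib Rd fhat - sq_loss d0 pib Rd (Qstar Rd)
      = \sum_s \sum_a d0 s * pib s a * (fhat s a - q s a) ^+ 2.
    rewrite /sq_loss -sumrB; apply: eq_bigr => s _.
    rewrite -sumrB; apply: eq_bigr => a _.
    by rewrite -mulrBr loss_diff.
  rewrite E in h.
  apply: le_trans (ler_wpM2l (ltW C0) h).
  rewrite mulr_sumr; apply: ler_sum => s _.
  rewrite /T mulr_sumr mulr_sumr; apply: ler_sum => a _.
  have h1 : 1 <= C * pib s a.
    by rewrite -(mulfV (lt0r_neq0 C0)); apply: ler_wpM2l; [exact: ltW | exact: hC].
  rewrite (_ : C * _ = d0 s * (fhat s a - q s a) ^+ 2 * (C * pib s a)); last by ring.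
  by apply: ler_peMr => //; rewrite mulr_ge0 // sqr_ge0.
pose vm s := \big[Num.max/q s a0]_a q s a.
pose y s := Num.max (vm s - q s (pi_fhat s)) 0.
have key2 : forall s, [/\ 0 <= y s, vm s - q s (pi_fhat s) <= y s
                      & y s ^+ 2 <= 4 * T s].
  move=> s.
  have [as_ Eas] : exists a, vm s = q s a.
    rewrite /vm; apply: (big_ind (fun v => exists a, v = q s a)).
    - by exists a0.
    - move=> x1 x2 [b1 ->] [b2 ->].
      have [h|h] := leP (q s b1) (q s b2).
        by exists b2.
      by exists b1.
    - by move=> a _; exists a.
  have Tge : forall a, (fhat s a - q s a) ^+ 2 <= T s.
    move=> a; rewrite /T (bigD1 a) //= lerDl.
    by apply: sumr_ge0 => i _; rewrite sqr_ge0.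
  set u := fhat s as_ - q s as_.
  set v := fhat s (pi_fhat s) - q s (pi_fhat s).
  have Hu := Tge as_; have Hv := Tge (pi_fhat s).
  rewrite -/u -/v in Hu Hv.
  have nu : `|u| ^+ 2 = u ^+ 2 by rewrite real_normK // num_real.
  have nv : `|v| ^+ 2 = v ^+ 2 by rewrite real_normK // num_real.
  have gu : - u <= `|u| by rewrite -normrN ler_norm.
  have gv : v <= `|v| by rewrite ler_norm.
  have u0 : 0 <= `|u| by [].
  have v0 : 0 <= `|v| by [].
  have hg := hgr s as_.
  have xz : y s <= `|u| + `|v|.
    rewrite /y ge_max; apply/andP; split; last by rewrite addr_ge0.
    rewrite Eas; rewrite /u /v in gu gv *; lra.
  have y0 : 0 <= y s by rewrite /y le_max lexx orbT.
  split => //.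
    by rewrite /y le_max lexx.
  have : y s ^+ 2 <= (`|u| + `|v|) ^+ 2.
    by rewrite lerXn2r // ?nnegrE // addr_ge0.
  move=> H; apply: (le_trans H).
  nra.
pose D := \sum_s d0 s * y s.
have hD : vstar d0 Rd a0 - value d0 Rd pi_fhat <= D.
  rewrite /vstar /value -sumrB; apply: ler_sum => s _.
  rewrite -mulrBr; apply: ler_wpM2l => //.
  by have [_ h _] := key2 s.
have hD2 : D ^+ 2 <= 4 * (C * eps).
  apply: le_trans (jensen_sq _ d00 d01) _.
  rewrite -ler_pdivrMl // mulr_sumr.
  apply: le_trans key1; apply: ler_sum => s _.
  have [_ _ h] := key2 s.
  rewrite mulrA (mulrC 4^-1) -mulrA ler_wpM2l //.
  by rewrite ler_pdivrMl.
have hD3 : D <= 2 * Num.sqrt (C * eps).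
  apply: (le_trans (ler_norm D)).
  rewrite -sqrtr_sqr.
  have -> : 2 * Num.sqrt (C * eps) = Num.sqrt (2 ^+ 2 * (C * eps)).
    by rewrite [RHS]sqrtrM ?sqr_ge0 // sqrtr_sqr ger0_norm.
  apply: ler_wsqrtr.
  by rewrite (_ : 2 ^+ 2 = 4 :> R) //; ring.
lra.
Qed.
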